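(* Let $k\in\mathbb{N}$ be fixed. Then the function $\beta\mapsto\delta(k,\beta)$ is strictly increasing on $[1,+\infty)$. Moreover $\delta(k,1)<0$ and $\delta(k,\sqrt2)>0$.
   Context: $\mathbb{N}=\{0,1,2,\dots\}$. For $t\ge 0$ let $q(t)=\lfloor t+1\rfloor/2$ if $\lfloor t\rfloor$ is odd and $q(t)=t-\lfloor t\rfloor/2$ if $\lfloor t\rfloor$ is even, and $p(t)=t+1-q(t)$. For $\beta\ge1$ let $\hat\sigma(t,\beta)\in(0,1)$ be the unique solution $\sigma$ of $\frac{p(t)\sigma}{\sqrt{1-\sigma^2}}+\frac{q(t)\sigma}{\sqrt{\beta^2-\sigma^2}}=1$, and $l(t,\beta)=\frac{p(t)}{\sqrt{1-\hat\sigma^2}}+\frac{\beta^2q(t)}{\sqrt{\beta^2-\hat\sigma^2}}-t-\sqrt2$. For $k\in\mathbb{N}$, $\delta(k,\beta)=l(2k+2,\beta)-l(2k,\beta)$. *)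

(* Defs.v *)
From Stdlib Require Import Reals Lra ZArith ClassicalEpsilon.
Open Scope R_scope.

Definition flo (t : R) : Z := Int_part t.

Definition qf (t : R) : R :=
  if Z.odd (flo t) then IZR (Int_part (t + 1)) / 2
  else t - IZR (flo t) / 2.

Definition pf (t : R) : R := t + 1 - qf t.

Definition is_sigma_hat (t beta sigma : R) : Prop :=
  0 < sigma < 1 /\
  pf t * sigma / sqrt (1 - sigma ^ 2) + qf t * sigma / sqrt (beta ^ 2 - sigma ^ 2) = 1.

(* the (unique) solution, chosen by Hilbert's epsilon *)
Definition sigma_hat (t beta : R) : R :=
  epsilon (inhabits 0) (fun s => is_sigma_hat t beta s).

Definition lf (t beta : R) : R :=
  let s := sigma_hat t beta in
  pf t / sqrt (1 - s ^ 2) + beta ^ 2 * qf t / sqrt (beta ^ 2 - s ^ 2) - t - sqrt 2.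

Definition delta (k : nat) (beta : R) : R :=
  lf (2 * INR k + 2) beta - lf (2 * INR k) beta.

(* Main.v *)
Require Import Defs.
From Stdlib Require Import Reals Lra Psatz ZArith ClassicalEpsilon.
From Coquelicot Require Import Coquelicot.
Open Scope R_scope.

Definition F (p q b x : R) := p * sqrt (1 - x ^ 2) + q * sqrt (b ^ 2 - x ^ 2) + x.

Lemma sqrt_facts (y : R) : 0 <= y -> 0 <= sqrt y /\ sqrt y * sqrt y = y.
Proof. intros; split; [apply sqrt_pos | apply sqrt_sqrt; auto]. Qed.

Lemma tang (c x y : R) : 1 <= c -> 0 <= x <= 1 -> 0 < y < 1 ->
  sqrt (c - x ^ 2) <= sqrt (c - y ^ 2) - y * (x - y) / sqrt (c - y ^ 2).
Proof.
  intros Hc Hx Hy.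
  assert (Ha : 0 < sqrt (c - y ^ 2)) by (apply sqrt_lt_R0; nra).
  destruct (sqrt_facts (c - y^2)) as [_ Ha2]; [nra|].
  destruct (sqrt_facts (c - x^2)) as [Hw Hw2]; [nra|].
  set (a := sqrt (c - y ^ 2)) in *. set (w := sqrt (c - x ^ 2)) in *.
  assert (Hwa : w * a <= c - x * y).
  { assert (H1 : (w*a)*(w*a) = (c - x^2)*(c-y^2)) by (rewrite <- Ha2, <- Hw2; ring).
    assert (x*y <= 1*1) by (apply Rmult_le_compat; lra).
    assert (H2 : 0 <= c - x*y) by lra.
    assert (H3 : 0 <= w * a) by nra.
    assert (H4 : 0 <= c * ((x-y)*(x-y))) by (apply Rmult_le_pos; [lra | apply Rle_0_sqr]).
    assert (H5 : (c-x*y)*(c-x*y) - (c - x^2)*(c-y^2) = c*((x-y)*(x-y))) by ring.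
    nra. }
  apply Rmult_le_reg_r with a; [lra|].
  replace ((a - y * (x - y) / a) * a) with (a*a - y*(x-y)) by (field; lra).
  nra.
Qed.

Lemma Fmax p q b s x : 0 <= p -> 0 <= q -> 1 <= b -> 0 < s < 1 ->
  p * s / sqrt (1 - s ^ 2) + q * s / sqrt (b ^ 2 - s ^ 2) = 1 ->
  0 <= x <= 1 -> F p q b x <= F p q b s.
Proof.
  intros Hp Hq Hb Hs Heq Hx.
  assert (HA : 0 < sqrt (1 - s ^ 2)) by (apply sqrt_lt_R0; nra).
  assert (HB : 0 < sqrt (b^2 - s ^ 2)) by (apply sqrt_lt_R0; nra).
  pose proof (tang 1 x s ltac:(lra) Hx Hs) as T1.
  pose proof (tang (b^2) x s ltac:(nra) Hx Hs) as T2.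
  unfold F.
  set (A := sqrt (1 - s ^ 2)) in *. set (B := sqrt (b^2 - s ^ 2)) in *.
  assert (E : p * (s * (x - s) / A) + q * (s * (x - s) / B) = (x - s) * (p * s / A + q * s / B))
    by (field; lra).
  rewrite Heq in E.
  apply Rmult_le_compat_l with (r := p) in T1; [|lra].
  apply Rmult_le_compat_l with (r := q) in T2; [|lra].
  lra.
Qed.

Lemma Fval p q b s : 1 <= b -> 0 < s < 1 ->
  p * s / sqrt (1 - s ^ 2) + q * s / sqrt (b ^ 2 - s ^ 2) = 1 ->
  p / sqrt (1 - s ^ 2) + b ^ 2 * q / sqrt (b ^ 2 - s ^ 2) = F p q b s.
Proof.
  intros Hb Hs Heq.
  assert (HA : 0 < sqrt (1 - s ^ 2)) by (apply sqrt_lt_R0; nra).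
  assert (HB : 0 < sqrt (b^2 - s ^ 2)) by (apply sqrt_lt_R0; nra).
  destruct (sqrt_facts (1 - s^2)) as [_ HA2]; [nra|].
  destruct (sqrt_facts (b^2 - s^2)) as [_ HB2]; [nra|].
  unfold F.
  set (A := sqrt (1 - s ^ 2)) in *. set (B := sqrt (b^2 - s ^ 2)) in *.
  assert (E : p / A + b ^ 2 * q / B - (p * A + q * B + s)
     = p * (1 - A*A - s*s) / A + q * (b^2 - B*B - s*s)/B + s * (p * s / A + q * s / B) - s)
    by (field; lra).
  rewrite Heq, HA2, HB2 in E.
  replace (1 - (1 - s^2) - s*s) with 0 in E by ring.
  replace (b^2 - (b^2 - s^2) - s*s) with 0 in E by ring.
  unfold Rdiv in E. lra.
Qed.

Lemma exists_sol p q b : 1 <= p -> 0 <= q -> 1 <= b ->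
  exists s, 0 < s < 1 /\ p * s / sqrt (1 - s ^ 2) + q * s / sqrt (b ^ 2 - s ^ 2) = 1.
Proof.
  intros Hp Hq Hb.
  set (f := fun x => p*x/sqrt(1-x^2) + q*x/sqrt(b^2-x^2) - 1).
  assert (Hc : forall a, 0 <= a <= 4/5 -> continuity_pt f a).
  { intros a Ha. apply continuity_pt_filterlim.
    assert (H : ex_derive f a).
    { unfold f. auto_derive. repeat split; try (apply Rgt_not_eq; apply sqrt_lt_R0); nra. }
    exact (ex_derive_continuous f a H). }
  assert (H0 : f 0 < 0) by (unfold f; unfold Rdiv; ring_simplify; lra).
  assert (H1 : 0 < f (4/5)).
  { unfold f.
    replace (1 - (4/5)^2) with (3/5 * (3/5)) by field.
    rewrite sqrt_square by lra.
    assert (HB : 0 < sqrt (b^2 - (4/5)^2)) by (apply sqrt_lt_R0; nra).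
    assert (0 <= q * (4/5) / sqrt (b ^ 2 - (4 / 5) ^ 2)).
    { unfold Rdiv. apply Rmult_le_pos; [lra|]. left; apply Rinv_0_lt_compat; lra. }
    replace (p * (4/5) / (3/5)) with (4/3 * p) by field. lra. }
  destruct (Ranalysis5.IVT_interv f 0 (4/5) Hc ltac:(lra) H0 H1) as [z [Hz Hfz]].
  exists z. split.
  - split; [|lra]. destruct (Req_dec z 0) as [->|]; [lra|lra].
  - unfold f in Hfz. lra.
Qed.
Lemma Int_part_IZR z : Int_part (IZR z) = z.
Proof. symmetry. apply Int_part_spec. lra. Qed.

Lemma qf_even (n : Z) : qf (IZR (2 * n)) = IZR n.
Proof.
  unfold qf, flo. rewrite Int_part_IZR. rewrite Z.odd_mul. change (Z.odd 2) with false. rewrite Bool.andb_false_l.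
  rewrite mult_IZR. field.
Qed.

Lemma qf1 k : qf (2 * INR k) = INR k.
Proof.
  rewrite INR_IZR_INZ.
  replace (2 * IZR (Z.of_nat k)) with (IZR (2 * Z.of_nat k)) by (rewrite mult_IZR; reflexivity).
  apply qf_even.
Qed.

Lemma qf2 k : qf (2 * INR k + 2) = INR k + 1.
Proof.
  rewrite INR_IZR_INZ.
  replace (2 * IZR (Z.of_nat k) + 2) with (IZR (2 * (Z.of_nat k + 1))) by (rewrite mult_IZR, plus_IZR; ring).
  rewrite qf_even, plus_IZR. reflexivity.
Qed.

Lemma pf1 k : pf (2 * INR k) = INR k + 1.
Proof. unfold pf. rewrite qf1. ring. Qed.

Lemma pf2 k : pf (2 * INR k + 2) = INR k + 2.
Proof. unfold pf. rewrite qf2. ring. Qed.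

Lemma L_facts t b : 1 <= pf t -> 0 <= qf t -> 1 <= b ->
  0 < sigma_hat t b < 1 /\
  pf t * sigma_hat t b / sqrt (1 - sigma_hat t b ^ 2) + qf t * sigma_hat t b / sqrt (b ^ 2 - sigma_hat t b ^ 2) = 1 /\
  lf t b = F (pf t) (qf t) b (sigma_hat t b) - t - sqrt 2.
Proof.
  intros Hp Hq Hb.
  assert (H : is_sigma_hat t b (sigma_hat t b)).
  { unfold sigma_hat. apply epsilon_spec.
    destruct (exists_sol (pf t) (qf t) b Hp Hq Hb) as [s Hs]. exists s. exact Hs. }
  destruct H as [H1 H2]. split; [exact H1|]. split; [exact H2|].
  unfold lf. rewrite (Fval (pf t) (qf t) b (sigma_hat t b) Hb H1 H2). reflexivity.
Qed.

Lemma key (K s u b1 b2 : R) : 0 <= K -> 0 < s < 1 -> 0 < u < 1 ->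
  (K+1)*(K+1)*(u*u) < 1 -> 1 <= b1 -> b1 < b2 ->
  K * (sqrt (b2^2 - u^2) - sqrt (b1^2 - u^2)) < (K+1) * (sqrt (b2^2 - s^2) - sqrt (b1^2 - s^2)).
Proof.
  intros HK Hs Hu Hku Hb1 Hb12.
  assert (HA1 : 0 < sqrt (b1^2 - s^2)) by (apply sqrt_lt_R0; nra).
  assert (HA2 : 0 < sqrt (b2^2 - s^2)) by (apply sqrt_lt_R0; nra).
  assert (HB1 : 0 < sqrt (b1^2 - u^2)) by (apply sqrt_lt_R0; nra).
  assert (HB2 : 0 < sqrt (b2^2 - u^2)) by (apply sqrt_lt_R0; nra).
  destruct (sqrt_facts (b1^2 - s^2)) as [_ EA1]; [nra|].
  destruct (sqrt_facts (b2^2 - s^2)) as [_ EA2]; [nra|].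
  destruct (sqrt_facts (b1^2 - u^2)) as [_ EB1]; [nra|].
  destruct (sqrt_facts (b2^2 - u^2)) as [_ EB2]; [nra|].
  set (A1 := sqrt (b1^2 - s^2)) in *. set (A2 := sqrt (b2^2 - s^2)) in *.
  set (B1 := sqrt (b1^2 - u^2)) in *. set (B2 := sqrt (b2^2 - u^2)) in *.
  assert (C : forall A B b, 1 <= b -> 0 < A -> 0 < B -> A*A = b^2 - s^2 -> B*B = b^2-u^2 ->
            K * A < (K+1) * B).
  { intros A B b Hb HA HB EA EB.
    assert (E1 : ((K+1)*B)*((K+1)*B) = (K+1)*(K+1)*(b^2) - (K+1)*(K+1)*(u*u)) by (transitivity ((K+1)*(K+1)*(B*B)); [ring | rewrite EB; ring]).
    assert (E2 : (K*A)*(K*A) = K*K*(b^2) - K*K*(s*s)) by (transitivity (K*K*(A*A)); [ring | rewrite EA; ring]).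
    assert (E3 : (2*K+1)*(b^2) >= 1) by nra.
    assert (E4 : 0 <= K*K*(s*s)) by nra.
    assert (E5 : (K*A)*(K*A) < ((K+1)*B)*((K+1)*B)) by nra.
    assert (0 <= K*A) by nra. assert (0 < (K+1)*B) by nra.
    nra. }
  pose proof (C A1 B1 b1 ltac:(lra) HA1 HB1 EA1 EB1) as C1.
  pose proof (C A2 B2 b2 ltac:(lra) HA2 HB2 EA2 EB2) as C2.
  set (D := b2^2 - b1^2).
  assert (HD : 0 < D) by (unfold D; nra).
  assert (X : A2 - A1 = D / (A1 + A2)) by (unfold D; apply Rmult_eq_reg_r with (A1+A2); [|lra]; field_simplify; [nra|lra]).
  assert (Y : B2 - B1 = D / (B1 + B2)) by (unfold D; apply Rmult_eq_reg_r with (B1+B2); [|lra]; field_simplify; [nra|lra]).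
  rewrite X, Y.
  assert (E : (K+1) * (D / (A1+A2)) - K * (D / (B1 + B2)) = D * ((K+1)*(B1+B2) - K*(A1+A2)) / ((A1+A2)*(B1+B2))) by (field; lra).
  assert (0 < D * ((K+1)*(B1+B2) - K*(A1+A2)) / ((A1+A2)*(B1+B2))).
  { apply Rdiv_lt_0_compat; [apply Rmult_lt_0_compat; lra | apply Rmult_lt_0_compat; lra]. }
  lra.
Qed.
Lemma facts1 k b : 1 <= b ->
  0 < sigma_hat (2*INR k) b < 1 /\
  (INR k + 1) * sigma_hat (2*INR k) b / sqrt (1 - sigma_hat (2*INR k) b ^ 2)
   + INR k * sigma_hat (2*INR k) b / sqrt (b ^ 2 - sigma_hat (2*INR k) b ^ 2) = 1 /\
  lf (2*INR k) b = F (INR k + 1) (INR k) b (sigma_hat (2*INR k) b) - 2 * INR k - sqrt 2.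
Proof.
  intros Hb. pose proof (pos_INR k).
  pose proof (L_facts (2*INR k) b) as L.
  rewrite pf1, qf1 in L. apply L; [lra | lra | exact Hb].
Qed.

Lemma facts2 k b : 1 <= b ->
  0 < sigma_hat (2*INR k+2) b < 1 /\
  (INR k + 2) * sigma_hat (2*INR k+2) b / sqrt (1 - sigma_hat (2*INR k+2) b ^ 2)
   + (INR k + 1) * sigma_hat (2*INR k+2) b / sqrt (b ^ 2 - sigma_hat (2*INR k+2) b ^ 2) = 1 /\
  lf (2*INR k+2) b = F (INR k + 2) (INR k + 1) b (sigma_hat (2*INR k+2) b) - (2 * INR k + 2) - sqrt 2.
Proof.
  intros Hb. pose proof (pos_INR k).
  pose proof (L_facts (2*INR k+2) b) as L.
  rewrite pf2, qf2 in L. apply L; [lra | lra | exact Hb].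
Qed.
Lemma mono k b1 b2 : 1 <= b1 -> b1 < b2 -> delta k b1 < delta k b2.
Proof.
  intros Hb1 Hb12. unfold delta.
  pose proof (pos_INR k) as HK.
  destruct (facts2 k b1 ltac:(lra)) as [S21 [E21 L21]].
  destruct (facts2 k b2 ltac:(lra)) as [S22 [E22 L22]].
  destruct (facts1 k b1 ltac:(lra)) as [S11 [E11 L11]].
  destruct (facts1 k b2 ltac:(lra)) as [S12 [E12 L12]].
  rewrite L21, L22, L11, L12.
  set (s := sigma_hat (2 * INR k + 2) b1) in *.
  set (u := sigma_hat (2 * INR k) b2) in *.
  pose proof (Fmax (INR k + 2) (INR k + 1) b2 _ s ltac:(lra) ltac:(lra) ltac:(lra) S22 E22 ltac:(lra)) as M1.
  pose proof (Fmax (INR k + 1) (INR k) b1 _ u ltac:(lra) ltac:(lra) ltac:(lra) S11 E11 ltac:(lra)) as M2.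
  assert (Hku : (INR k + 1) * (INR k + 1) * (u*u) < 1).
  { assert (HC : 0 < sqrt (1 - u^2)) by (apply sqrt_lt_R0; nra).
    assert (HB : 0 < sqrt (b2^2 - u^2)) by (apply sqrt_lt_R0; nra).
    destruct (sqrt_facts (1 - u^2)) as [_ EC]; [nra|].
    set (C := sqrt (1 - u^2)) in *. set (B := sqrt (b2^2 - u^2)) in *.
    assert (0 <= INR k * u / B) by (unfold Rdiv; apply Rmult_le_pos; [nra | left; apply Rinv_0_lt_compat; lra]).
    assert (H1 : (INR k + 1) * u / C <= 1) by lra.
    assert (H2 : (INR k + 1) * u <= C).
    { apply Rmult_le_reg_r with (/ C); [apply Rinv_0_lt_compat; lra|].
      rewrite Rinv_r by lra. exact H1. }
    assert (0 <= (INR k + 1) * u) by nra.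
    nra. }
  pose proof (key (INR k) s u b1 b2 HK S21 S12 Hku Hb1 Hb12) as KY.
  unfold F in *. lra.
Qed.

Lemma at1 k : delta k 1 < 0.
Proof.
  unfold delta. pose proof (pos_INR k) as HK.
  destruct (facts2 k 1 ltac:(lra)) as [S2 [E2 L2]].
  destruct (facts1 k 1 ltac:(lra)) as [S1 [E1 L1]].
  rewrite L2, L1.
  set (bb := 2 * INR k + 1).
  set (m := 4 * bb^2 + 1).
  assert (Hbb : 1 <= bb) by (unfold bb; lra).
  assert (Hm : 0 < m) by (unfold m; nra).
  set (sg := 4 * bb / m).
  assert (Hsg : 0 <= sg <= 1).
  { unfold sg. split; [unfold Rdiv; apply Rmult_le_pos; [lra | left; apply Rinv_0_lt_compat; lra]|].
    apply Rmult_le_reg_r with m; [lra|]. unfold Rdiv. rewrite Rmult_assoc, Rinv_l by lra. unfold m; nra. }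
  pose proof (Fmax (INR k + 1) (INR k) 1 _ sg ltac:(lra) ltac:(lra) ltac:(lra) S1 E1 Hsg) as M.
  assert (Fsg : F (INR k + 1) (INR k) 1 sg = bb + 2 * bb / m).
  { unfold F. rewrite pow1.
    replace (1 - sg ^ 2) with (((4*bb^2-1)/m) * ((4*bb^2-1)/m)) by (unfold sg, m; field; unfold m in Hm; apply Rgt_not_eq; nra).
    rewrite sqrt_square.
    2:{ unfold Rdiv; apply Rmult_le_pos; [nra | left; apply Rinv_0_lt_compat; lra]. }
    unfold sg.
    replace ((INR k + 1) * ((4 * bb ^ 2 - 1) / m) + INR k * ((4 * bb ^ 2 - 1) / m) + 4 * bb / m)
      with ((bb * (4 * bb ^ 2 - 1) + 4 * bb) / m) by (unfold bb; field; lra).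
    replace (bb + 2 * bb / m) with ((bb * m + 2 * bb) / m) by (field; lra).
    f_equal. unfold m. ring. }
  rewrite Fsg in M.
  set (s := sigma_hat (2 * INR k + 2) 1) in *.
  unfold F. rewrite pow1.
  destruct (sqrt_facts (1 - s^2)) as [Hc Ec]; [nra|].
  set (c := sqrt (1 - s^2)) in *.
  set (e := 2 * bb / m) in *.
  assert (He : e * m = 2 * bb) by (unfold e; field; lra).
  assert (He0 : 0 < e) by (unfold e; unfold Rdiv; apply Rmult_lt_0_compat; [lra | apply Rinv_0_lt_compat; lra]).
  set (a := 2 * INR k + 3).
  assert (Ha : a = bb + 2) by (unfold a, bb; ring).
  assert (Z2 : (a*c + s) * (a*c + s) <= a*a + 1).
  { assert (Hid : (a*a+1)*(c*c + s*s) - (a*c+s)*(a*c+s) = (a*s - c)*(a*s-c)) by ring.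
    assert (c*c + s*s = 1) by (rewrite Ec; ring).
    assert (0 <= (a*s - c)*(a*s-c)) by apply Rle_0_sqr. nra. }
  assert (Hae : 2 * a * e > 1).
  { assert (2*a*e*m > m) by (replace (2*a*e*m) with (2*a*(e*m)) by ring; rewrite He, Ha; unfold m; nra).
    nra. }
  assert (Zlt : a*c + s < a + e).
  { destruct (Rlt_or_le (a*c+s) (a+e)) as [H|H]; [exact H|].
    exfalso. assert (0 < a + e) by (rewrite Ha; lra). nra. }
  assert (E : (INR k + 2) * c + (INR k + 1) * c + s = a * c + s) by (unfold a; ring).
  rewrite E. unfold F in M. rewrite pow1 in M. lra.
Qed.
Lemma atsqrt2 k : 0 < delta k (sqrt 2).
Proof.
  set (r := sqrt 2).
  assert (Hr2 : r ^ 2 = 2) by (apply pow2_sqrt; lra).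
  assert (Hr0 : 0 <= r) by apply sqrt_pos.
  assert (Hr1 : 1 < r) by nra.
  unfold delta. pose proof (pos_INR k) as HK.
  destruct (facts2 k r ltac:(lra)) as [S2 [E2 L2]].
  destruct (facts1 k r ltac:(lra)) as [S1 [E1 L1]].
  rewrite L2, L1.
  set (s := sigma_hat (2 * INR k) r) in *.
  unfold F at 2. rewrite Hr2.
  destruct (sqrt_facts (1 - s^2)) as [Hc Ec]; [nra|].
  assert (Hw : sqrt (2 - s^2) <= r) by (apply sqrt_le_1_alt; nra).
  assert (Hw0 : 0 <= sqrt (2 - s^2)) by apply sqrt_pos.
  set (c := sqrt (1 - s^2)) in *. set (w := sqrt (2 - s^2)) in *.
  assert (Ecs : c*c + s*s = 1) by (rewrite Ec; ring).
  destruct k as [|k'].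
  -
    rewrite INR_0 in *.
    pose proof (Fmax (0 + 2) (0 + 1) r _ (3/5) ltac:(lra) ltac:(lra) ltac:(lra) S2 E2 ltac:(lra)) as M.
    unfold F in M. rewrite Hr2 in M.
    replace (1 - (3/5)^2) with (4/5 * (4/5)) in M by field.
    rewrite sqrt_square in M by lra.
    destruct (sqrt_facts (2 - (3/5)^2)) as [Hv Ev]; [nra|].
    set (v := sqrt (2 - (3/5)^2)) in *.
    assert (Hcs : c + s <= r).
    { assert (0 <= (c-s)*(c-s)) by apply Rle_0_sqr.
      assert (Hrr : r*r = 2) by (rewrite <- Hr2; ring).
      assert ((c+s)*(c+s) <= r*r) by nra.
      destruct (Rle_or_lt (c+s) r) as [HH|HH]; [exact HH|]. exfalso. nra. }
    assert (Hrr : r*r = 2) by (rewrite <- Hr2; ring).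
    assert (Ev' : v*v = 41/25) by (rewrite Ev; field).
    assert (Hv2 : v > r - 1/5).
    { destruct (Rlt_or_le (r - 1/5) v) as [HH|HH]; [exact HH|]. exfalso. nra. }
    unfold F; rewrite Hr2. lra.
  - set (K := INR (S k')) in *.
    assert (HK1 : 1 <= K) by (unfold K; rewrite S_INR; pose proof (pos_INR k'); lra).
    pose proof (Fmax (K + 2) (K + 1) r _ 0 ltac:(lra) ltac:(lra) ltac:(lra) S2 E2 ltac:(lra)) as M.
    unfold F in M. rewrite Hr2 in M.
    replace (1 - 0^2) with 1 in M by ring. replace (2 - 0^2) with 2 in M by ring.
    rewrite sqrt_1 in M. fold r in M.
    assert (HZ : ((K+1)*c + s) * ((K+1)*c + s) <= (K+1)*(K+1) + 1).
    { assert (Hid : ((K+1)*(K+1)+1)*(c*c + s*s) - ((K+1)*c+s)*((K+1)*c+s) = ((K+1)*s - c)*((K+1)*s-c)) by ring.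
      assert (0 <= ((K+1)*s - c)*((K+1)*s-c)) by apply Rle_0_sqr. nra. }
    assert (HKr : (K+1)*(K+1) + 1 < (K + r)*(K + r)) by nra.
    assert (HZl : (K+1)*c + s < K + r).
    { destruct (Rlt_or_le ((K+1)*c + s) (K + r)) as [HH|HH]; [exact HH|]. exfalso. nra. }
    assert (K * w <= K * r) by (apply Rmult_le_compat_l; lra).
    unfold F; rewrite Hr2. lra.
Qed.

Theorem lemma3p10 (k : nat) :
  (forall b1 b2 : R, 1 <= b1 -> b1 < b2 -> delta k b1 < delta k b2) /\
  delta k 1 < 0 /\ 0 < delta k (sqrt 2).
Proof.
  split; [intros; apply mono; assumption|].
  split; [apply at1 | apply atsqrt2].
Qed.
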